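(* Let $n\ge 3$ and let $H$ be a $3$-uniform hypergraph on $[n]$ such that every $4$-subset of $[n]$ contains an edge of $H$. Let $\Delta=K(H)$ be the $2$-dimensional simplicial complex whose $2$-faces are the edges of $H$ and whose $1$-skeleton is the complete graph on $[n]$. Then $\dim_{\mathbb{Q}} H_1(\Delta;\mathbb{Q})\le n-2$.
   Context: $H_1(\Delta;\mathbb{Q})$ is the first simplicial homology group of $\Delta$ with rational coefficients. *)

(* Defs.v *)
From HB Require Import structures.
From mathcomp Require Import all_boot all_order all_algebra.
Set Implicit Arguments. Unset Strict Implicit. Unset Printing Implicit Defensive.
Import Order.TTheory GRing.Theory Num.Theory.
Local Open Scope ring_scope.

(* Simplices are sets of vertices, oriented by the
   natural order of the vertices.  Chains are row vectors; boundary maps act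
   by right multiplication. *)

Definition edges (n : nat) : {set {set 'I_n}} := [set e : {set 'I_n} | #|e| == 2%N].

(* boundary coefficient of vertex v in oriented edge e = [a,b], a<b : b - a *)
Definition bd1_coef (n : nat) (e : {set 'I_n}) (v : 'I_n) : rat :=
  if v \in e then (if [exists w in e, (v < w)%N] then -1 else 1) else 0.

(* boundary coefficient of edge e in oriented triangle t = [a,b,c]:
   d[a,b,c] = [b,c] - [a,c] + [a,b]; the face omitting the vertex x of
   position k gets sign (-1)^k. *)
Definition bd2_coef (n : nat) (t e : {set 'I_n}) : rat :=
  if e \subset t then
    \sum_(x in t :\: e) (-1) ^+ #|[set y in t | (y < x)%N]|
  else 0.

Definition bd1 (n : nat) : 'M[rat]_(#|edges n|, n) :=
  \matrix_(i, j) bd1_coef (enum_val i) j.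

Definition bd2 (n : nat) (H : {set {set 'I_n}}) : 'M[rat]_(#|H|, #|edges n|) :=
  \matrix_(i, j) bd2_coef (enum_val i) (enum_val j).

(* dim_Q H_1(Delta; Q) = dim Z_1 - dim B_1 = dim ker d1 - rank d2. *)
Definition H1dim (n : nat) (H : {set {set 'I_n}}) : nat :=
  (\rank (kermx (bd1 n)) - \rank (bd2 H))%N.

(* Main.v *)
Require Import Defs.
From HB Require Import structures.
From mathcomp Require Import all_boot all_order all_algebra.
From mathcomp Require Import zify.
Set Implicit Arguments. Unset Strict Implicit. Unset Printing Implicit Defensive.

Definition lrel n (H : {set {set 'I_n}}) (S : {set 'I_n}) (v : 'I_n) : rel 'I_n :=
  fun x y => [&& x \in S :\ v, y \in S :\ v & [set v; x; y] \in H].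

Lemma lrel_sym n H S v : symmetric (@lrel n H S v).
Proof.
move=> x y; rewrite /lrel; have -> : [set v; x; y] = [set v; y; x].
  by apply/setP => z; rewrite !inE; case: (z == v); case: (z == x); case: (z == y).
by case: (x \in S :\ v); case: (y \in S :\ v).
Qed.

Lemma lconn_sym n H S v : connect_sym (@lrel n H S v).
Proof. exact/sym_connect_sym/lrel_sym. Qed.

Lemma card3 (T : finType) (p q r : T) : p != q -> p != r -> q != r -> #|[set p; q; r]| = 3.
Proof.
move=> pq pr qr.
have -> : [set p; q; r] = p |: (q |: [set r]).
  by apply/setP => z; rewrite !inE orbA.
by rewrite !cardsU1 cards1 !inE (negPf pq) (negPf pr) (negPf qr).
Qed.

Lemma card4 (T : finType) (v p q r : T) : v != p -> v != q -> v != r ->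
  p != q -> p != r -> q != r -> #|[set v; p; q; r]| = 4.
Proof.
move=> vp vq vr pq pr qr.
have -> : [set v; p; q; r] = v |: (p |: (q |: [set r])).
  by apply/setP => z; rewrite !inE !orbA.
by rewrite !cardsU1 cards1 !inE (negPf pq) (negPf pr) (negPf qr) (negPf vp) (negPf vq) (negPf vr).
Qed.

Lemma K1 n (H : {set {set 'I_n}}) S v p q r
  (HH3 : forall t, t \in H -> #|t| = 3)
  (H4 : forall F : {set 'I_n}, #|F| = 4 -> exists2 t, t \in H & t \subset F) :
  p \in S :\ v -> q \in S :\ v -> r \in S :\ v ->
  ~~ connect (lrel H S v) p q -> ~~ connect (lrel H S v) p r ->
  ~~ connect (lrel H S v) q r -> [set p; q; r] \in H.
Proof.
move=> pS qS rS npq npr nqr.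
have ne : forall x y, ~~ connect (lrel H S v) x y -> x != y.
  by move=> x y; apply: contra => /eqP ->; apply: connect0.
have vne : forall x, x \in S :\ v -> v != x.
  by move=> x; rewrite !inE eq_sym => /andP [].
have [t tH tF] := H4 _ (card4 (vne _ pS) (vne _ qS) (vne _ rS) (ne _ _ npq) (ne _ _ npr) (ne _ _ nqr)).
have t3 := HH3 _ tH.
have inF : forall x, x \in t -> x != v -> x \in [set p; q; r].
  move=> x /(subsetP tF); rewrite !inE => /orP [/orP [/orP [-> //|->]|->]|->];
  by rewrite ?orbT.
case vt: (v \in t).
- have := cardsD1 v t; rewrite vt t3 => /esym/eqP; rewrite add1n eqSS => /cards2P [y [z [yz tD]]].
  have yt : y \in t :\ v by rewrite tD !inE eqxx.
  have zt : z \in t :\ v by rewrite tD !inE eqxx orbT.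
  move: (yt) (zt); rewrite !inE => /andP [yv yt'] /andP [zv zt'].
  have yp := inF _ yt' yv; have zp := inF _ zt' zv.
  have lyz : lrel H S v y z.
    rewrite /lrel; have -> : [set v; y; z] = t by rewrite -(setD1K vt) tD; apply/setP => w; rewrite !inE orbA.
    rewrite /lrel tH andbT.
    by move: yp zp; rewrite !inE => /orP [/orP [] | ] /eqP -> /orP [/orP [] | ] /eqP ->;
       rewrite -!in_setD1 ?pS ?qS ?rS.
  have cyz := connect1 lyz.
  exfalso.
  move: yp zp yz cyz; rewrite !inE => /orP [/orP [] | ] /eqP -> /orP [/orP [] | ] /eqP ->;
    rewrite ?eqxx // => _; rewrite ?(lconn_sym H S v q p) ?(lconn_sym H S v r p) ?(lconn_sym H S v r q);
    apply/negP => //.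
- have sub : t \subset [set p; q; r].
    apply/subsetP => x xt; apply: inF => //; apply: contraFneq vt => <-.
    done.
  have -> : [set p; q; r] = t.
    apply/eqP; rewrite eq_sym eqEcard sub t3 card3 //; exact: ne.
  done.
Qed.

Definition comp n (H : {set {set 'I_n}}) S v a := [set x in S :\ v | connect (lrel H S v) a x].

Lemma inSD n (S : {set 'I_n}) v x : x \in S -> x != v -> x \in S :\ v.
Proof. by move=> xS xv; rewrite !inE xS xv. Qed.

Lemma no_bad3 n (H : {set {set 'I_n}}) (S : {set 'I_n})
  (HH3 : forall t, t \in H -> #|t| = 3)
  (H4 : forall F : {set 'I_n}, #|F| = 4 -> exists2 t, t \in H & t \subset F)
  (Hall : forall v a, v \in S -> a \in S :\ v -> exists b c,
     [/\ b \in S :\ v, c \in S :\ v, ~~ connect (lrel H S v) a b,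
         ~~ connect (lrel H S v) a c & ~~ connect (lrel H S v) b c]) :
  forall k v a, v \in S -> a \in S :\ v -> #|comp H S v a| < k -> False.
Proof.
elim=> [//|k IH] v a vS aSv.
rewrite ltnS => Ck.
have aS : a \in S by move: aSv; rewrite !inE => /andP [].
have av : a != v by move: aSv; rewrite !inE => /andP [].
have ne : forall w x y, ~~ connect (lrel H S w) x y -> x != y.
  by move=> w x y; apply: contra => /eqP ->; apply: connect0.
have [b [c [bS cS nab nac nbc]]] := Hall v a vS aSv.
have bS' : b \in S :\ a.
  by apply: inSD; [move: bS; rewrite !inE => /andP [] | rewrite eq_sym; exact: ne nab].
have cS' : c \in S :\ a.
  by apply: inSD; [move: cS; rewrite !inE => /andP [] | rewrite eq_sym; exact: ne nac].
have vSa : v \in S :\ a by apply: inSD => //; rewrite eq_sym.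
have [q [r [qS rS nvq nvr nqr]]] := Hall a v aS vSa.
have M : forall y, y \in S :\ v -> ~~ connect (lrel H S v) a y -> connect (lrel H S a) b y.
  move=> y yS nay.
  have yS' : y \in S :\ a.
    by apply: inSD; [move: yS; rewrite !inE => /andP [] | rewrite eq_sym; exact: ne nay].
  have labc : lrel H S a b c by rewrite /lrel bS' cS' (K1 HH3 H4 aSv bS cS nab nac nbc).
  case cby: (connect (lrel H S v) b y).
  - have ncy : ~~ connect (lrel H S v) c y.
      apply/negP => ccy; move/negP: nbc; apply; apply: connect_trans cby _.
      by rewrite lconn_sym.
    have lacy : lrel H S a c y by rewrite /lrel cS' yS' (K1 HH3 H4 aSv cS yS nac nay ncy).
    exact: connect_trans (connect1 labc) (connect1 lacy).
  - have lab : lrel H S a b y by rewrite /lrel bS' yS' (K1 HH3 H4 aSv bS yS nab nay (negbT cby)).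
    exact: connect1 lab.
pose w := if connect (lrel H S a) b q then r else q.
have wS : w \in S :\ a by rewrite /w; case: ifP.
have nbw : ~~ connect (lrel H S a) b w.
  rewrite /w; case: ifP => cbq; last by rewrite cbq.
  apply/negP => cbr; move/negP: nqr; apply.
  by apply: connect_trans cbr; rewrite lconn_sym.
have nvw : ~~ connect (lrel H S a) v w by rewrite /w; case: ifP.
have sub : comp H S a w \subset comp H S v a :\ a.
  apply/subsetP => x; rewrite !inE => /andP [/andP [xa xS] cwx].
  rewrite xa /=.
  have xv : x != v.
    apply: contraNneq nvw => exv; rewrite lconn_sym -exv //.
  have xSv : x \in S :\ v by apply: inSD.
  move: (xSv); rewrite !inE => -> /=.
  apply/negPn/negP => nax.
  move/negP: nbw; apply; apply: connect_trans (M _ xSv nax) _.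
  by rewrite lconn_sym.
have aC : a \in comp H S v a by rewrite inE aSv connect0.
have lt : #|comp H S a w| < #|comp H S v a|.
  by apply: leq_ltn_trans (subset_leq_card sub) _; rewrite [X in _ < X](cardsD1 a (comp H S v a)) aC add1n.
exact: (IH a w aS wS (leq_trans lt Ck)).
Qed.

From Stdlib Require Import Classical.

Lemma good_vertex n (H : {set {set 'I_n}}) (S : {set 'I_n})
  (HH3 : forall t, t \in H -> #|t| = 3)
  (H4 : forall F : {set 'I_n}, #|F| = 4 -> exists2 t, t \in H & t \subset F) :
  1 < #|S| -> exists2 v, v \in S & exists a0 b0, [/\ a0 \in S :\ v, b0 \in S :\ v &
     forall x, x \in S :\ v -> connect (lrel H S v) a0 x || connect (lrel H S v) b0 x].
Proof.
move=> S2; apply: NNPP => Hn.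
have Hall : forall v a, v \in S -> a \in S :\ v -> exists b c,
     [/\ b \in S :\ v, c \in S :\ v, ~~ connect (lrel H S v) a b,
         ~~ connect (lrel H S v) a c & ~~ connect (lrel H S v) b c].
  move=> v a vS aSv.
  case: (pickP [pred b | (b \in S :\ v) && ~~ connect (lrel H S v) a b]) => [b /andP [bS nab] | allc].
  - case: (pickP [pred c | [&& c \in S :\ v, ~~ connect (lrel H S v) a c & ~~ connect (lrel H S v) b c]]) => [c /and3P [cS nac nbc] | allc2].
    + by exists b, c.
    + exfalso; apply: Hn; exists v => //; exists a, b; split => // x xS.
      by have := allc2 x; rewrite /= xS /= => /negbT; rewrite negb_and !negbK.
  - exfalso; apply: Hn; exists v => //; exists a, a; split => // x xS.
    by have := allc x; rewrite /= xS /= => /negbT; rewrite negbK => ->.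
have [v vS] : exists v, v \in S by apply/card_gt0P; apply: ltnW.
have [a aS] : exists a, a \in S :\ v.
  by apply/card_gt0P; move: S2; rewrite (cardsD1 v S) vS add1n ltnS.
exact: (no_bad3 HH3 H4 Hall (k := #|comp H S v a|.+1) vS aS (ltnSn _)).
Qed.

Import Order.TTheory GRing.Theory Num.Theory.
Local Open Scope ring_scope.

Definition ev N (j : 'I_N) : 'rV[rat]_N := delta_mx 0 j.

Lemma elim_vec (N m : nat) (X : 'M[rat]_(m, N)) (r : 'rV[rat]_N) (j0 : 'I_N) :
  (r <= X)%MS -> r 0 j0 != 0 ->
  (forall j, j != j0 -> r 0 j != 0 -> (ev j <= X)%MS) -> (ev j0 <= X)%MS.
Proof.
move=> rX rj0 Hj.
have E : ev j0 = (r 0 j0)^-1 *: (r - \sum_(j | j != j0) r 0 j *: ev j).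
  by rewrite /ev {2}(row_sum_delta r) (bigD1 j0) //= addrK scalerA mulVf // scale1r.
rewrite E scalemx_sub // addmx_sub // -scaleN1r scalemx_sub // summx_sub // => j jj0.
have [->|rj] := eqVneq (r 0 j) 0; first by rewrite scale0r sub0mx.
by rewrite scalemx_sub // Hj.
Qed.

Lemma bd2_row n (H : {set {set 'I_n}}) t (tH : t \in H) :
  ((\row_j bd2_coef t (enum_val j) : 'rV[rat]_#|edges n|) <= bd2 H)%MS.
Proof.
have -> : (\row_j bd2_coef t (enum_val j) : 'rV[rat]_#|edges n|) = row (enum_rank_in tH t) (bd2 H).
  by apply/rowP => j; rewrite !mxE enum_rankK_in.
exact: row_sub.
Qed.

Lemma ev_edge n (j : 'I_#|edges n|) : #|enum_val j| = 2%N.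
Proof. by have := enum_valP j; rewrite inE => /eqP. Qed.

Lemma e_uvec n (j : 'I_#|edges n|) :
  ev j = (\row_k ((enum_val k == enum_val j)%:R) : 'rV[rat]_#|edges n|).
Proof.
apply/rowP => k; rewrite !mxE /=.
by rewrite (inj_eq enum_val_inj).
Qed.

Lemma bd2_nz n (v y x : 'I_n) : v != y -> v != x -> y != x ->
  bd2_coef [set v; y; x] [set v; x] != 0.
Proof.
move=> vy vx yx.
rewrite /bd2_coef.
have -> : [set v; x] \subset [set v; y; x].
  by apply/subsetP => z; rewrite !inE => /orP [] ->; rewrite ?orbT.
have -> : [set v; y; x] :\: [set v; x] = [set y].
  apply/setP => z; rewrite !inE.
  have [->|zy] := eqVneq z y; first by rewrite eq_sym (negbTE vy) (negbTE yx).
  by rewrite orbF; case: (z == v); case: (z == x).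
by rewrite big_set1 signr_eq0.
Qed.

Lemma bd2_supp n (t e : {set 'I_n}) : bd2_coef t e != 0 -> e \subset t.
Proof. by rewrite /bd2_coef; case: ifP => //; rewrite eqxx. Qed.

Definition uv n (e : {set 'I_n}) : 'rV[rat]_#|edges n| :=
  \row_k ((enum_val k == e)%:R).

Lemma ev_uv n (j : 'I_#|edges n|) e : enum_val j = e -> ev j = uv e.
Proof. by move=> <-; rewrite e_uvec. Qed.

Lemma set2C (T : finType) (a b : T) : [set a; b] = [set b; a].
Proof. by apply/setP => z; rewrite !inE orbC. Qed.

Lemma step_lemma n (H : {set {set 'I_n}}) (S : {set 'I_n}) (v : 'I_n)
  (HH3 : forall t, t \in H -> #|t| = 3%N) m (X : 'M[rat]_(m, #|edges n|))
  (bX : (bd2 H <= X)%MS)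
  (Old : forall j : 'I_#|edges n|, enum_val j \subset S :\ v -> (ev j <= X)%MS) y x :
  lrel H S v y x ->
  (forall j : 'I_#|edges n|, enum_val j = [set v; y] -> (ev j <= X)%MS) ->
  (forall j : 'I_#|edges n|, enum_val j = [set v; x] -> (ev j <= X)%MS).
Proof.
rewrite /lrel => /and3P [yS xS tH] Ry j ej.
have vy : v != y by move: yS; rewrite !inE eq_sym => /andP [].
have vx : v != x by move: xS; rewrite !inE eq_sym => /andP [].
have yx : y != x.
  apply/negP => /eqP exy; move: (HH3 _ tH); rewrite -exy.
  have -> : [set v; y; y] = [set v; y] by apply/setP => z; rewrite !inE -orbA orbb.
  by rewrite cards2 vy.
set t := [set v; y; x] in tH.
apply: (elim_vec (r := \row_k bd2_coef t (enum_val k))).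
- exact: submx_trans (bd2_row tH) bX.
- by rewrite mxE ej bd2_nz.
move=> j' jj'; rewrite mxE => /bd2_supp sub.
have c2 := ev_edge j'.
have ne : enum_val j' != [set v; x].
  by rewrite -ej (inj_eq enum_val_inj).
have ye : y \in enum_val j'.
  apply/negPn/negP => ny; move/negP: ne; apply.
  rewrite eqEcard c2 cards2 vx leqnn andbT.
  apply/subsetP => z ze; have := subsetP sub z ze; rewrite !inE.
  have zy : z != y by apply: contraNneq ny => <-.
  by rewrite (negbTE zy) orbF.
have := cardsD1 y (enum_val j'); rewrite ye c2 add1n => /esym/eqP; rewrite eqSS.
case/cards1P => w ew.
have e' : enum_val j' = [set y; w] by rewrite -(setD1K ye) ew.
have wy : w != y by have := set11 w; rewrite -ew !inE => /andP [].
have wt : w \in t by apply: (subsetP sub); rewrite e' !inE eqxx orbT.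
move: wt; rewrite /t !inE (negbTE wy) orbF => /orP [/eqP wv | /eqP wx].
- by apply: Ry; rewrite e' wv set2C.
- apply: Old; rewrite e' wx; apply/subsetP => z; rewrite !inE.
  by case/orP => /eqP ->; [move: yS | move: xS]; rewrite !inE.
Qed.

Lemma arith (k a b : nat) : k != 0%N -> (a <= k.*2 - 3)%N ->
  (b <= (if k == 1%N then 1 else 2))%N -> (a + b <= k.+1.*2 - 3)%N.
Proof.
move=> k0 ha; case: ifP => /eqP k1 hb; rewrite -!muln2 in ha *; lia.
Qed.

Lemma span_ind n (H : {set {set 'I_n}})
  (HH3 : forall t, t \in H -> #|t| = 3%N)
  (H4 : forall F : {set 'I_n}, #|F| = 4%N -> exists2 t, t \in H & t \subset F) :
  forall k (S : {set 'I_n}), #|S| = k -> exists W : 'M[rat]_#|edges n|,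
    (\rank W <= k.*2 - 3)%N /\
    forall j : 'I_#|edges n|, enum_val j \subset S -> (ev j <= bd2 H + W)%MS.
Proof.
elim=> [|k IH] S cS.
  exists 0; rewrite mxrank0; split => // j sub.
  by have := subset_leq_card sub; rewrite ev_edge cS.
have [k0|kpos] := eqVneq k 0%N.
  exists 0; rewrite mxrank0; split => // j sub.
  by have := subset_leq_card sub; rewrite ev_edge cS k0.
have [v vS [a0 [b0 [aS bS Hcon]]]] : exists2 v, v \in S & exists a0 b0, [/\ a0 \in S :\ v, b0 \in S :\ v &
     forall x, x \in S :\ v -> connect (lrel H S v) a0 x || connect (lrel H S v) b0 x].
  by apply: good_vertex => //; rewrite cS ltnS lt0n.
have cSv : #|S :\ v| = k by move: cS; rewrite (cardsD1 v S) vS add1n => [[]].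
have [W' [rW' HW']] := IH _ cSv.
pose W := (W' + (uv [set v; a0] + uv [set v; b0]))%MS.
exists W; split.
  have r2 : (\rank (uv [set v; a0] + uv [set v; b0])%MS <= (if k == 1%N then 1 else 2))%N.
    case: ifP => [/eqP k1|_].
      have [z ez] : exists z, S :\ v = [set z] by apply/cards1P; rewrite cSv k1.
      move: aS bS; rewrite ez !inE => /eqP -> /eqP ->.
      apply: leq_trans (mxrankS (_ : (_ <= uv [set v; z])%MS)) (rank_leq_row _).
      by rewrite addsmx_sub submx_refl.
    apply: leq_trans (mxrank_adds_leqif _ _).1 _.
    exact: (leq_add (rank_leq_row _) (rank_leq_row _)).
  apply: leq_trans (mxrank_adds_leqif _ _).1 _.
  exact: arith kpos rW' r2.
set X := (bd2 H + W)%MS.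
have bX : (bd2 H <= X)%MS by apply: addsmxSl.
have WX : (W <= X)%MS by apply: addsmxSr.
have Old : forall j : 'I_#|edges n|, enum_val j \subset S :\ v -> (ev j <= X)%MS.
  move=> j sub; apply: submx_trans (HW' j sub) _.
  by apply: addsmxS => //; apply: addsmxSl.
have Ra : forall j : 'I_#|edges n|, enum_val j = [set v; a0] -> (ev j <= X)%MS.
  move=> j ej; rewrite (ev_uv ej); apply: submx_trans WX.
  by apply: submx_trans (addsmxSr W' _); apply: addsmxSl.
have Rb : forall j : 'I_#|edges n|, enum_val j = [set v; b0] -> (ev j <= X)%MS.
  move=> j ej; rewrite (ev_uv ej); apply: submx_trans WX.
  by apply: submx_trans (addsmxSr W' _); apply: addsmxSr.
pose R := [pred x | [forall j : 'I_#|edges n|, (enum_val j == [set v; x]) ==> (ev j <= X)%MS]].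
have RP : forall x, reflect (forall j : 'I_#|edges n|, enum_val j = [set v; x] -> (ev j <= X)%MS) (x \in R).
  move=> x; rewrite inE; apply: (iffP forallP) => [h j ej | h j].
    by have := h j; rewrite ej eqxx.
  by apply/implyP => /eqP; apply: h.
have cl : closed (lrel H S v) R.
  move=> y x lyx; apply/RP/RP => Rh.
    exact: (@step_lemma n H S v HH3 _ X bX Old y x lyx Rh).
  by apply: (@step_lemma n H S v HH3 _ X bX Old x y) Rh; rewrite lrel_sym.
move=> j sub.
case vj: (v \in enum_val j); last first.
  apply: Old; apply/subsetP => z ze; rewrite !inE (subsetP sub _ ze) andbT.
  by apply: contraFneq vj => <-.
have := cardsD1 v (enum_val j); rewrite vj ev_edge add1n => /esym/eqP; rewrite eqSS.
case/cards1P => x ex.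
have ej : enum_val j = [set v; x] by rewrite -(setD1K vj) ex.
have xS : x \in S :\ v.
  have := set11 x; rewrite -ex !inE => /andP [-> xe]; rewrite (subsetP sub _ xe).
  done.
have : x \in R.
  case/orP: (Hcon x xS) => c.
    by rewrite -(closed_connect cl c); apply/RP.
  by rewrite -(closed_connect cl c); apply/RP.
by move/RP; apply.
Qed.

Lemma rank_bd1 n : (0 < n)%N -> (n.-1 <= \rank (bd1 n))%N.
Proof.
move=> n0.
pose a0 := Ordinal n0.
have K : (kermx (bd1 n)^T <= (const_mx 1 : 'rV[rat]_n))%MS.
  apply/row_subP => i; set u := row i _.
  have u0 : u *m (bd1 n)^T = 0 by rewrite /u -row_mul mulmx_ker row0.
  clearbody u.
  apply/sub_rVP; exists (u 0 a0); apply/rowP => b; rewrite !mxE mulr1.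
  have [->|ba] := eqVneq b a0; first by [].
  set e := [set a0; b].
  have eE : e \in edges n by rewrite inE cards2 (eq_sym a0) ba.
  have := congr1 (fun M : 'M[rat]_(1, #|edges n|) => M 0 (enum_rank_in eE e)) u0.
  rewrite !mxE (bigD1 a0) // (bigD1 b) //= big1 => [|j /andP [ja jb]]; last first.
    by rewrite !mxE enum_rankK_in // /bd1_coef !inE (negbTE ja) (negbTE jb) mulr0.
  rewrite !mxE enum_rankK_in // /bd1_coef !inE !eqxx orbT /=.
  have -> : [exists w in e, (a0 < w)%N].
    by apply/existsP; exists b; rewrite !inE eqxx orbT /= lt0n; apply: contra ba => /eqP bz; apply/eqP/val_inj.
  have -> : [exists w in e, (b < w)%N] = false.
    apply/existsP => [[w]]; rewrite !inE => /andP [/orP [] /eqP -> ]; rewrite ?ltnn //.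
  by rewrite mulr1 addr0 mulrN1 addrC => /eqP; rewrite subr_eq0 => /eqP.
have := mxrankS K; rewrite mxrank_ker mxrank_tr => h.
have := rank_leq_row (const_mx 1 : 'rV[rat]_n) => h2.
lia.
Qed.

Local Close Scope ring_scope.

Theorem mainTheorem10 (n : nat) (H : {set {set 'I_n}}) :
  (3 <= n)%N ->
  (forall t, t \in H -> #|t| = 3%N) ->
  (forall S : {set 'I_n}, #|S| = 4%N -> exists2 t, t \in H & t \subset S) ->
  (H1dim H <= n - 2)%N.
Proof.
move=> n3 HH3 H4.
have [W [rW HW]] := span_ind HH3 H4 (S := setT) (k := n) (etrans (cardsT _) (card_ord n)).
have full : (((1%:M)%R : 'M[rat]_#|edges n|) <= bd2 H + W)%MS.
  by apply/row_subP => j; rewrite row1; apply: HW; apply: subsetT.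
have r1 := mxrankS full; rewrite mxrank1 in r1.
have r2 := (mxrank_adds_leqif (bd2 H) W).1.
have r3 := rank_bd1 (n := n) (leq_trans (isT : 0 < 3) n3).
rewrite /H1dim mxrank_ker; rewrite -muln2 in rW.
lia.
Qed.
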